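(* Let $R$ be the right shift on $\ell^2_{\mathbb{H}}(\mathbb{Z})$ defined by $R(x)=y$ with $y_i=x_{i+1}$ for $i\neq-1$ and $y_{-1}=0$. Then $\sigma_{S,\pi}^{\Phi^0}(R)$ is properly contained in $\sigma_S(R)$.
   Context: $\mathbb{H}$ denotes the quaternions, $Re(q)$ the real part and $|q|$ the norm. $\ell^2_{\mathbb{H}}(\mathbb{Z})=\{x:\mathbb{Z}\to\mathbb{H}:\sum_i|x_i|^2<\infty\}$ is a right quaternionic Hilbert space with $xa=(x_ia)_i$ and $\langle x,y\rangle=\sum_i\overline{x_i}y_i$, equipped with the left multiplication induced by the standard Hilbert basis $\{e_n\}$, i.e. $qx=(qx_i)_i$. $\mathcal{B}=\mathcal{B}(\ell^2_{\mathbb{H}}(\mathbb{Z}))$ (bounded right linear operators with $(qT)x=q(Tx)$, $(Tq)x=T(qx)$, composition, operator norm) is a quaternionic two-sided Banach algebra with unit $\mathbb{I}$; $\mathcal{K}$ is its ideal of compact operators and $\pi:\mathcal{B}\to\mathcal{B}/\mathcal{K}$ the quotient map. For $T\in\mathcal{B}$, $R_q(T)=T^2-2Re(q)T+|q|^2\mathbb{I}$, $\sigma_S(T)=\{q\in\mathbb{H}:R_q(T)\notin\mathcal{B}^{-1}\}$, $\Phi_\pi^0=\mathcal{B}^{-1}+\mathcal{K}$, and $\sigma_{S,\pi}^{\Phi^0}(T)=\{q\in\mathbb{H}:R_q(T)\notin\Phi_\pi^0\}$. *)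

(* Defs.v *)
From Stdlib Require Import Reals ZArith.
From Coquelicot Require Import Coquelicot.
Open Scope R_scope.

Record quat := Quat { qre : R; qi : R; qj : R; qk : R }.

Definition q0 : quat := Quat 0 0 0 0.
Definition qadd (p q : quat) : quat :=
  Quat (qre p + qre q) (qi p + qi q) (qj p + qj q) (qk p + qk q).
Definition qopp (p : quat) : quat := Quat (- qre p) (- qi p) (- qj p) (- qk p).
Definition qmul (p q : quat) : quat :=
  Quat (qre p * qre q - qi p * qi q - qj p * qj q - qk p * qk q)
       (qre p * qi q + qi p * qre q + qj p * qk q - qk p * qj q)
       (qre p * qj q - qi p * qk q + qj p * qre q + qk p * qi q)
       (qre p * qk q + qi p * qj q - qj p * qi q + qk p * qre q).
Definition qscal (r : R) (p : quat) : quat :=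
  Quat (r * qre p) (r * qi p) (r * qj p) (r * qk p).
Definition qnorm2 (p : quat) : R :=
  qre p * qre p + qi p * qi p + qj p * qj p + qk p * qk p.
Definition qnorm (p : quat) : R := sqrt (qnorm2 p).

Definition seqH := Z -> quat.

Definition sadd (x y : seqH) : seqH := fun i => qadd (x i) (y i).
Definition sopp (x : seqH) : seqH := fun i => qopp (x i).
Definition ssub (x y : seqH) : seqH := sadd x (sopp y).
Definition srmul (x : seqH) (a : quat) : seqH := fun i => qmul (x i) a.
Definition sscal (r : R) (x : seqH) : seqH := fun i => qscal r (x i).

Definition psum2 (x : seqH) (N : nat) : R :=
  sum_f_R0 (fun n => qnorm2 (x (Z.of_nat n - Z.of_nat N)%Z)) (2 * N).

Definition in_l2 (x : seqH) : Prop := exists M : R, forall N, psum2 x N <= M.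

Definition l2norm2 (x : seqH) : R := real (Lim_seq (psum2 x)).
Definition l2norm (x : seqH) : R := sqrt (l2norm2 x).

(** * Operators.  An operator is a map on sequences; only its action on
    l^2 matters. *)
Definition op := seqH -> seqH.

Definition op_id : op := fun x => x.

Definition in_B (T : op) : Prop :=
  (forall x, in_l2 x -> in_l2 (T x)) /\
  (forall x y a, in_l2 x -> in_l2 y ->
     forall i, T (sadd (srmul x a) y) i = sadd (srmul (T x) a) (T y) i) /\
  (exists C : R, 0 <= C /\ forall x, in_l2 x -> l2norm (T x) <= C * l2norm x).

Definition invertible_B (T : op) : Prop :=
  in_B T /\ exists S : op, in_B S /\
    (forall x, in_l2 x -> forall i, S (T x) i = x i) /\
    (forall x, in_l2 x -> forall i, T (S x) i = x i).

Definition l2_cvg (u : nat -> seqH) (y : seqH) : Prop :=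
  is_lim_seq (fun k => l2norm (ssub (u k) y)) 0.

(** K is compact: K in B and K maps bounded sequences to sequences having
    a convergent subsequence (equivalently, bounded sets to relatively
    compact sets, l^2 being complete). *)
Definition compact_op (K : op) : Prop :=
  in_B K /\
  forall u : nat -> seqH, (forall k, in_l2 (u k)) ->
    (exists M : R, forall k, l2norm (u k) <= M) ->
    exists (phi : nat -> nat) (y : seqH),
      (forall n m, (n < m)%nat -> (phi n < phi m)%nat) /\ in_l2 y /\
      l2_cvg (fun k => K (u (phi k))) y.

Definition in_Phi0 (T : op) : Prop :=
  exists A K : op, invertible_B A /\ compact_op K /\
    forall x, in_l2 x -> forall i, T x i = sadd (A x) (K x) i.

Definition Rq (q : quat) (T : op) : op :=
  fun x => sadd (ssub (T (T x)) (sscal (2 * qre q) (T x)))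
                (sscal (qnorm2 q) x).

Definition sigma_S (T : op) : quat -> Prop :=
  fun q => ~ invertible_B (Rq q T).
Definition sigma_S_Phi0 (T : op) : quat -> Prop :=
  fun q => ~ in_Phi0 (Rq q T).

Definition shiftR : op :=
  fun x i => if Z.eqb i (-1)%Z then q0 else x (i + 1)%Z.

(* Main.v *)
Require Import Defs.
From Stdlib Require Import Reals ZArith.
From Coquelicot Require Import Coquelicot.
From Stdlib Require Import Lia Lra Psatz Rtopology List.
From Stdlib Require Import Classical ClassicalEpsilon FunctionalExtensionality.
Open Scope R_scope.
Import ListNotations.

Lemma qnorm2_nonneg p : 0 <= qnorm2 p.
Proof. unfold qnorm2; nra. Qed.

Lemma sum_nonneg f m : (forall n, 0 <= f n) -> 0 <= sum_f_R0 f m.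
Proof. intros H; induction m; simpl; [apply H|]. specialize (H (S m)); lra. Qed.

Lemma term_le f n m : (forall k, 0 <= f k) -> (n <= m)%nat -> f n <= sum_f_R0 f m.
Proof.
  intros H Hn; induction m.
  - assert (n = 0%nat) by lia; subst; simpl; lra.
  - destruct (Nat.eq_dec n (S m)) as [->|Hne]; simpl.
    + pose proof (sum_nonneg f m H); lra.
    + specialize (IHm ltac:(lia)). specialize (H (S m)); lra.
Qed.

Lemma sum_mono_len f m l : (forall k, 0 <= f k) -> sum_f_R0 f m <= sum_f_R0 f (m + l).
Proof.
  intros H; induction l.
  - rewrite Nat.add_0_r; lra.
  - replace (m + S l)%nat with (S (m + l)) by lia; simpl. specialize (H (S (m+l))); lra.
Qed.

Lemma sum_shift f m j : (forall k, 0 <= f k) ->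
  sum_f_R0 (fun n => f (n + j)%nat) m <= sum_f_R0 f (m + j).
Proof.
  intros H; induction m.
  - simpl. apply term_le; auto.
  - simpl. replace (S (m + j)) with (S m + j)%nat by lia. lra.
Qed.

Lemma sum_ind_le (c : R) (N : nat) (j : Z) m : 0 <= c ->
  0 <= sum_f_R0 (fun n => if Z.eqb (Z.of_nat n - Z.of_nat N) j then c else 0) m <= c /\
  ((Z.of_nat m < j + Z.of_nat N)%Z ->
    sum_f_R0 (fun n => if Z.eqb (Z.of_nat n - Z.of_nat N) j then c else 0) m = 0).
Proof.
  intros Hc; induction m as [|m IH].
  - cbn [sum_f_R0]. destruct (Z.eqb_spec (Z.of_nat 0 - Z.of_nat N) j); split; try lra; intros; try lia; auto.
  - rewrite tech5; cbv beta. destruct IH as [[H1 H2] H3].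
    destruct (Z.eqb_spec (Z.of_nat (S m) - Z.of_nat N) j).
    + rewrite H3 by lia. split; [lra|]. intros; lia.
    + split; [lra|]. intros; rewrite H3 by lia; lra.
Qed.

Lemma psum2_mono x N : psum2 x N <= psum2 x (S N).
Proof.
  unfold psum2.
  set (f := fun n => qnorm2 (x (Z.of_nat n - Z.of_nat (S N))%Z)).
  rewrite (sum_eq _ (fun n => f (n + 1)%nat)).
  2:{ intros i _; unfold f; do 2 f_equal; lia. }
  eapply Rle_trans; [apply sum_shift; intros; apply qnorm2_nonneg|].
  replace (2 * S N)%nat with (2 * N + 1 + 1)%nat by lia.
  apply sum_mono_len; intros; apply qnorm2_nonneg.
Qed.

Lemma psum2_nonneg x N : 0 <= psum2 x N.
Proof. apply sum_nonneg; intros; apply qnorm2_nonneg. Qed.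

Lemma is_lim_psum2 x : in_l2 x -> is_lim_seq (psum2 x) (l2norm2 x).
Proof.
  intros [M HM].
  destruct (ex_finite_lim_seq_incr (psum2 x) M (psum2_mono x) HM) as [l Hl].
  unfold l2norm2. rewrite (is_lim_seq_unique _ _ Hl). exact Hl.
Qed.

Lemma psum2_le_norm x N : in_l2 x -> psum2 x N <= l2norm2 x.
Proof. intros H. apply is_lim_seq_incr_compare; [apply is_lim_psum2; auto | apply psum2_mono]. Qed.

Lemma l2norm2_nonneg x : in_l2 x -> 0 <= l2norm2 x.
Proof. intros H; eapply Rle_trans; [apply (psum2_nonneg x 0)|apply psum2_le_norm; auto]. Qed.

Lemma norm_le x M : (forall N, psum2 x N <= M) -> l2norm2 x <= M.
Proof.
  intros H. assert (Hl : in_l2 x) by (exists M; auto).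
  pose proof (is_lim_seq_le (psum2 x) (fun _ => M) (l2norm2 x) M H (is_lim_psum2 x Hl)
     (is_lim_seq_const M)). simpl in H0; auto.
Qed.

Lemma point_le x j : in_l2 x -> qnorm2 (x j) <= l2norm2 x.
Proof.
  intros H. set (N := Z.to_nat (Z.abs j)).
  eapply Rle_trans; [|apply (psum2_le_norm x N H)].
  unfold psum2.
  set (f := fun n => qnorm2 (x (Z.of_nat n - Z.of_nat N)%Z)).
  replace (qnorm2 (x j)) with (f (Z.to_nat (j + Z.of_nat N))).
  - apply term_le; [intros; apply qnorm2_nonneg| unfold N; lia].
  - unfold f; do 2 f_equal; unfold N; lia.
Qed.

Lemma two_point x N : (forall i, i <> (-1)%Z -> i <> (-2)%Z -> qnorm2 (x i) = 0) ->
  psum2 x N <= qnorm2 (x (-1)%Z) + qnorm2 (x (-2)%Z).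
Proof.
  intros H. unfold psum2.
  eapply Rle_trans.
  - apply (sum_Rle _ (fun n => (if Z.eqb (Z.of_nat n - Z.of_nat N) (-1) then qnorm2 (x (-1)%Z) else 0)
       + (if Z.eqb (Z.of_nat n - Z.of_nat N) (-2) then qnorm2 (x (-2)%Z) else 0))).
    intros n _.
    destruct (Z.eqb_spec (Z.of_nat n - Z.of_nat N) (-1)) as [E|E].
    + rewrite E. destruct (Z.eqb_spec (-1) (-2)); [lia|lra].
    + destruct (Z.eqb_spec (Z.of_nat n - Z.of_nat N) (-2)) as [E2|E2].
      * rewrite E2; lra.
      * rewrite H by auto; lra.
  - rewrite plus_sum.
    destruct (sum_ind_le (qnorm2 (x (-1)%Z)) N (-1) (2*N) (qnorm2_nonneg _)) as [[_ A] _].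
    destruct (sum_ind_le (qnorm2 (x (-2)%Z)) N (-2) (2*N) (qnorm2_nonneg _)) as [[_ B] _].
    lra.
Qed.

Lemma two_point_l2 x : (forall i, i <> (-1)%Z -> i <> (-2)%Z -> qnorm2 (x i) = 0) ->
  in_l2 x /\ l2norm2 x <= qnorm2 (x (-1)%Z) + qnorm2 (x (-2)%Z).
Proof.
  intros H; split.
  - exists (qnorm2 (x (-1)%Z) + qnorm2 (x (-2)%Z)); intros; apply two_point; auto.
  - apply norm_le; intros; apply two_point; auto.
Qed.

Definition shZ (k : Z) : op := fun x i => x (i + k)%Z.

Lemma psum_shift x k N : psum2 (shZ k x) N <= psum2 x (N + Z.to_nat (Z.abs k)).
Proof.
  unfold psum2, shZ. set (m := Z.to_nat (Z.abs k)).
  set (j := Z.to_nat (k + Z.of_nat m)).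
  set (f := fun n => qnorm2 (x (Z.of_nat n - Z.of_nat (N + m))%Z)).
  rewrite (sum_eq _ (fun n => f (n + j)%nat)).
  2:{ intros i _; unfold f, j, m; do 2 f_equal; lia. }
  eapply Rle_trans; [apply sum_shift; intros; apply qnorm2_nonneg|].
  replace (2 * (N + m))%nat with (2 * N + j + (2 * m - j))%nat by (unfold j, m; lia).
  apply sum_mono_len; intros; apply qnorm2_nonneg.
Qed.

Lemma shZ_inB k : in_B (shZ k).
Proof.
  split; [|split].
  - intros x [M HM]. exists M. intros N. eapply Rle_trans; [apply psum_shift|apply HM].
  - intros; reflexivity.
  - exists 1; split; [lra|]. intros x Hx. rewrite Rmult_1_l. unfold l2norm.
    apply sqrt_le_1_alt. apply norm_le. intros N.
    eapply Rle_trans; [apply psum_shift|apply psum2_le_norm; auto].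
Qed.

Lemma shZ_inv : invertible_B (shZ 2).
Proof.
  split; [apply shZ_inB|]. exists (shZ (-2)). split; [apply shZ_inB|].
  split; intros x _ i; unfold shZ; f_equal; lia.
Qed.

Fixpoint mkphi (g : nat -> nat -> nat) (n : nat) : nat :=
  match n with 0 => g 0%nat 0%nat | S n => g (S n) (S (mkphi g n)) end.

Definition incr (phi : nat -> nat) := forall n m, (n < m)%nat -> (phi n < phi m)%nat.

Lemma incr_of_succ phi : (forall n, (phi n < phi (S n))%nat) -> incr phi.
Proof.
  intros H n m Hnm; induction Hnm.
  - apply H.
  - specialize (H m); lia.
Qed.

Lemma incr_ge phi : incr phi -> forall n, (n <= phi n)%nat.
Proof.
  intros H n; induction n; [lia|]. specialize (H n (S n) ltac:(lia)); lia.
Qed.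

Lemma BW1 u B : (forall n, Rabs (u n) <= B) ->
  exists phi (l : R), incr phi /\ is_lim_seq (fun n => u (phi n)) l.
Proof.
  intros HB.
  destruct (Bolzano_Weierstrass u (fun c => -B <= c <= B) (compact_P3 (-B) B)) as [l Hl].
  { intros n; specialize (HB n); apply Rabs_le_between in HB; lra. }
  assert (H' : forall n N, exists p, (N <= p)%nat /\ Rabs (u p - l) < / INR (S n)).
  { intros n N.
    assert (Hp : 0 < / INR (S n)) by (apply Rinv_0_lt_compat, lt_0_INR; lia).
    destruct (Hl (disc l (mkposreal _ Hp)) N) as [p [Hp1 Hp2]].
    - exists (mkposreal _ Hp); intros y Hy; exact Hy.
    - exists p; split; auto. }
  set (g := fun n N => proj1_sig (constructive_indefinite_description _ (H' n N))).
  assert (Hg : forall n N, (N <= g n N)%nat /\ Rabs (u (g n N) - l) < / INR (S n)).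
  { intros n N; unfold g; destruct (constructive_indefinite_description _ _); auto. }
  exists (mkphi g), l; split.
  - apply incr_of_succ; intros n; simpl. destruct (Hg (S n) (S (mkphi g n))); lia.
  - apply is_lim_seq_spec. intros eps.
    destruct (archimed_cor1 eps (cond_pos eps)) as [N [HN HN0]].
    exists N; intros n Hn.
    assert (Hn' : Rabs (u (mkphi g n) - l) < / INR (S n)).
    { destruct n; simpl; apply Hg. }
    eapply Rlt_trans; [exact Hn'|]. eapply Rle_lt_trans; [|exact HN].
    apply Rinv_le_contravar; [apply lt_0_INR; lia| apply le_INR; lia].
Qed.

Lemma subseq_lim v l psi : incr psi -> is_lim_seq v l -> is_lim_seq (fun n => v (psi n)) l.
Proof.
  intros Hi Hv. apply is_lim_seq_subseq; auto.
  intros P [N HN]. unfold filtermap. exists N. intros n Hn. apply HN. pose proof (incr_ge psi Hi n). unfold ge in *; lia.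
Qed.

Lemma BWlist (L : list (nat -> R)) B : (forall v, In v L -> forall n, Rabs (v n) <= B) ->
  exists phi, incr phi /\ forall v, In v L -> exists l : R, is_lim_seq (fun n => v (phi n)) l.
Proof.
  induction L as [|v L IH]; intros H.
  - exists (fun n => n); split; [unfold incr; intros; lia| intros v []].
  - destruct IH as [phi [Hphi Hl]]. { intros; apply H; simpl; auto. }
    destruct (BW1 (fun n => v (phi n)) B) as [psi [l [Hpsi Hlim]]]. { intros; apply H; simpl; auto. }
    exists (fun n => phi (psi n)); split.
    + intros n m Hnm; apply Hphi, Hpsi, Hnm.
    + intros w [<-|Hw].
      * exists l; exact Hlim.
      * destruct (Hl w Hw) as [l' Hl']. exists l'. apply (subseq_lim (fun n => w (phi n))); auto.
Qed.

Lemma quat_eq p q : qre p = qre q -> qi p = qi q -> qj p = qj q -> qk p = qk q -> p = q.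
Proof. destruct p, q; simpl; intros; subst; reflexivity. Qed.

Definition Kop : op := fun x i =>
  if Z.eqb i (-1) then qopp (x 1%Z) else if Z.eqb i (-2) then qopp (x 0%Z) else q0.

Lemma Kop_support x i : i <> (-1)%Z -> i <> (-2)%Z -> Kop x i = q0.
Proof.
  intros H1 H2; unfold Kop. rewrite (proj2 (Z.eqb_neq _ _) H1), (proj2 (Z.eqb_neq _ _) H2); auto.
Qed.

Lemma qnorm2_q0 : qnorm2 q0 = 0.
Proof. unfold qnorm2, q0; simpl; ring. Qed.

Lemma decomp x i : Rq q0 shiftR x i = sadd (shZ 2 x) (Kop x) i.
Proof.
  destruct (Z.eqb_spec i (-1)) as [->|H1].
  { unfold Rq, shiftR, sadd, ssub, sopp, sscal, shZ, Kop. cbn. apply quat_eq; simpl; rewrite qnorm2_q0; ring. }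
  destruct (Z.eqb_spec i (-2)) as [->|H2].
  { unfold Rq, shiftR, sadd, ssub, sopp, sscal, shZ, Kop. cbn. apply quat_eq; simpl; rewrite qnorm2_q0; ring. }
  cbv beta delta [Rq shiftR sadd ssub sopp sscal shZ Kop].
  rewrite (proj2 (Z.eqb_neq _ _) H1), (proj2 (Z.eqb_neq _ _) H2),
    (proj2 (Z.eqb_neq (i+1) (-1)) ltac:(lia)).
  replace (i+1+1)%Z with (i+2)%Z by lia.
  apply quat_eq; simpl; unfold qnorm2, q0; simpl; ring.
Qed.

Lemma qnorm2_opp p : qnorm2 (qopp p) = qnorm2 p.
Proof. unfold qnorm2, qopp; simpl; ring. Qed.

Lemma Kop_l2 x : in_l2 (Kop x) /\ l2norm2 (Kop x) <= qnorm2 (x 1%Z) + qnorm2 (x 0%Z).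
Proof.
  destruct (two_point_l2 (Kop x)) as [H1 H2].
  { intros i Ha Hb; rewrite Kop_support; auto; apply qnorm2_q0. }
  split; auto. unfold Kop at 2 3 in H2; cbn -[qnorm2] in H2.
  rewrite !qnorm2_opp in H2; auto.
Qed.

Lemma Kop_inB : in_B Kop.
Proof.
  split; [|split].
  - intros x _; apply Kop_l2.
  - intros x y a _ _ i. unfold Kop, sadd, srmul.
    destruct (Z.eqb i (-1)); [|destruct (Z.eqb i (-2))]; apply quat_eq; simpl; ring.
  - exists 2; split; [lra|]. intros x Hx. unfold l2norm.
    replace 2 with (sqrt 4).
    2:{ replace 4 with (2*2) by ring; apply sqrt_square; lra. }
    rewrite <- sqrt_mult_alt by lra. apply sqrt_le_1_alt.
    destruct (Kop_l2 x) as [_ H]. pose proof (point_le x 1 Hx). pose proof (point_le x 0 Hx).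
    pose proof (l2norm2_nonneg x Hx). lra.
Qed.

Lemma sq_lim a (l : R) : is_lim_seq a l -> is_lim_seq (fun k => (a k - l) * (a k - l)) 0.
Proof.
  intros H.
  assert (H0 : is_lim_seq (fun k => a k - l) 0).
  { replace 0 with (l - l) by ring. apply is_lim_seq_minus'; auto. apply is_lim_seq_const. }
  replace 0 with (0 * 0) by ring. apply is_lim_seq_mult'; auto.
Qed.

Lemma plus_lim0 a b : is_lim_seq a 0 -> is_lim_seq b 0 -> is_lim_seq (fun k => a k + b k) 0.
Proof. intros; replace 0 with (0 + 0) by ring; apply is_lim_seq_plus'; auto. Qed.

Lemma comp_bound p B : qnorm2 p <= B * B ->
  Rabs (qre p) <= Rabs B /\ Rabs (qi p) <= Rabs B /\ Rabs (qj p) <= Rabs B /\ Rabs (qk p) <= Rabs B.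
Proof.
  unfold qnorm2; intros H.
  refine (conj _ (conj _ (conj _ _))); apply Rsqr_le_abs_0; unfold Rsqr; nra.
Qed.

Lemma Kop_compact : compact_op Kop.
Proof.
  split; [apply Kop_inB|].
  intros u Hu [M HM].
  assert (Hb : forall k j, qnorm2 (u k j) <= M * M).
  { intros k j. pose proof (point_le (u k) j (Hu k)). pose proof (l2norm2_nonneg _ (Hu k)).
    pose proof (HM k). unfold l2norm in H1. pose proof (sqrt_sqrt _ H0).
    pose proof (sqrt_pos (l2norm2 (u k))). nra. }
  destruct (BWlist [fun k => qre (u k 0%Z); fun k => qi (u k 0%Z); fun k => qj (u k 0%Z);
                    fun k => qk (u k 0%Z); fun k => qre (u k 1%Z); fun k => qi (u k 1%Z);
                    fun k => qj (u k 1%Z); fun k => qk (u k 1%Z)] (Rabs M)) as [phi [Hphi Hl]].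
  { intros v Hv n. destruct (comp_bound _ _ (Hb n 0%Z)) as (?&?&?&?).
    destruct (comp_bound _ _ (Hb n 1%Z)) as (?&?&?&?).
    simpl in Hv. repeat (destruct Hv as [<-|Hv]; [assumption|]). destruct Hv. }
  destruct (Hl (fun k => qre (u k 0%Z)) ltac:(simpl; tauto)) as [a1 Ha1].
  destruct (Hl (fun k => qi (u k 0%Z)) ltac:(simpl; tauto)) as [a2 Ha2].
  destruct (Hl (fun k => qj (u k 0%Z)) ltac:(simpl; tauto)) as [a3 Ha3].
  destruct (Hl (fun k => qk (u k 0%Z)) ltac:(simpl; tauto)) as [a4 Ha4].
  destruct (Hl (fun k => qre (u k 1%Z)) ltac:(simpl; tauto)) as [b1 Hb1].
  destruct (Hl (fun k => qi (u k 1%Z)) ltac:(simpl; tauto)) as [b2 Hb2].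
  destruct (Hl (fun k => qj (u k 1%Z)) ltac:(simpl; tauto)) as [b3 Hb3].
  destruct (Hl (fun k => qk (u k 1%Z)) ltac:(simpl; tauto)) as [b4 Hb4].
  set (y := fun i => if Z.eqb i (-1) then qopp (Quat b1 b2 b3 b4)
                     else if Z.eqb i (-2) then qopp (Quat a1 a2 a3 a4) else q0).
  exists phi, y. split; [exact Hphi|]. split.
  - apply two_point_l2. intros i H1 H2; unfold y.
    rewrite (proj2 (Z.eqb_neq _ _) H1), (proj2 (Z.eqb_neq _ _) H2). apply qnorm2_q0.
  - unfold l2_cvg.
    set (E := fun k => qnorm2 (ssub (Kop (u (phi k))) y (-1)%Z) + qnorm2 (ssub (Kop (u (phi k))) y (-2)%Z)).
    apply is_lim_seq_le_le with (u := fun _ => 0) (w := fun k => sqrt (E k)).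
    + intros k. split; [apply sqrt_pos|]. unfold l2norm. apply sqrt_le_1_alt. apply two_point_l2.
      intros i H1 H2; unfold ssub, sadd, sopp; rewrite Kop_support by auto; unfold y.
      rewrite (proj2 (Z.eqb_neq _ _) H1), (proj2 (Z.eqb_neq _ _) H2).
      unfold qnorm2, qadd, qopp, q0; simpl; ring.
    + apply is_lim_seq_const.
    + rewrite <- sqrt_0. apply is_lim_seq_continuous; [apply continuity_pt_sqrt; lra|].
      apply is_lim_seq_ext with (u := fun k =>
        (qre (u (phi k) 1%Z) - b1) * (qre (u (phi k) 1%Z) - b1) +
        (qi (u (phi k) 1%Z) - b2) * (qi (u (phi k) 1%Z) - b2) +
        (qj (u (phi k) 1%Z) - b3) * (qj (u (phi k) 1%Z) - b3) +
        (qk (u (phi k) 1%Z) - b4) * (qk (u (phi k) 1%Z) - b4) +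
        (qre (u (phi k) 0%Z) - a1) * (qre (u (phi k) 0%Z) - a1) +
        (qi (u (phi k) 0%Z) - a2) * (qi (u (phi k) 0%Z) - a2) +
        (qj (u (phi k) 0%Z) - a3) * (qj (u (phi k) 0%Z) - a3) +
        (qk (u (phi k) 0%Z) - a4) * (qk (u (phi k) 0%Z) - a4)).
      * intros k. unfold E, ssub, sadd, sopp, Kop, y. cbn. unfold qnorm2; simpl; ring.
      * repeat apply plus_lim0; apply sq_lim; assumption.
Qed.

Definition zop : op := fun _ _ => q0.

Lemma zero_l2 x : in_l2 (zop x) /\ l2norm2 (zop x) <= 0.
Proof.
  destruct (two_point_l2 (zop x)) as [H1 H2].
  { intros; apply qnorm2_q0. }
  split; auto. unfold zop in H2 at 2 3. rewrite qnorm2_q0 in H2. lra.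
Qed.

Lemma zop_compact : compact_op zop.
Proof.
  split; [split; [|split]|].
  - intros x _; apply zero_l2.
  - intros; unfold zop, sadd, srmul; apply quat_eq; unfold q0; simpl; ring.
  - exists 0; split; [lra|]. intros x _. unfold l2norm.
    destruct (zero_l2 x) as [_ H]. rewrite Rmult_0_l, <- sqrt_0. apply sqrt_le_1_alt; auto.
  - intros u _ _. exists (fun n => n), (zop (fun _ => q0)). split; [intros; lia|]. split; [apply zero_l2|].
    unfold l2_cvg. apply is_lim_seq_ext with (u := fun _ => 0); [|apply is_lim_seq_const].
    intros k. unfold l2norm. rewrite <- sqrt_0. f_equal.
    destruct (two_point_l2 (ssub (zop (u k)) (zop (fun _ => q0)))) as [H1 H2].
    { intros; unfold ssub, sadd, sopp, zop, qnorm2, qadd, qopp, q0; simpl; ring. }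
    symmetry; apply Rle_antisym; [|apply l2norm2_nonneg; auto].
    eapply Rle_trans; [exact H2|]. unfold ssub, sadd, sopp, zop, qnorm2, qadd, qopp, q0; simpl; lra.
Qed.

Lemma part1 q : invertible_B (Rq q shiftR) -> in_Phi0 (Rq q shiftR).
Proof.
  intros H. exists (Rq q shiftR), zop. split; [auto|]. split; [apply zop_compact|].
  intros x _ i. unfold sadd, zop. apply quat_eq; unfold q0; simpl; ring.
Qed.

Lemma not_inv : ~ invertible_B (Rq q0 shiftR).
Proof.
  intros [HB [S [_ [H1 _]]]].
  set (w := fun i => if Z.eqb i (-2) then Quat 1 0 0 0 else q0).
  assert (Hw : in_l2 w).
  { apply two_point_l2. intros i Ha Hb; unfold w. rewrite (proj2 (Z.eqb_neq _ _) Hb). apply qnorm2_q0. }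
  assert (Hx : in_l2 (shZ (-2) w)) by (apply (shZ_inB (-2)); auto).
  assert (Hz : in_l2 (fun _ => q0)) by (apply (zero_l2 (fun _ => q0))).
  assert (E : Rq q0 shiftR (shZ (-2) w) = Rq q0 shiftR (fun _ => q0)).
  { apply functional_extensionality; intros i.
    cbv beta delta [Rq shiftR sadd ssub sopp sscal shZ w].
    repeat match goal with |- context [Z.eqb ?a ?b] => destruct (Z.eqb_spec a b) end;
      try lia; apply quat_eq; unfold qnorm2, q0; simpl; ring. }
  pose proof (H1 _ Hx 0%Z) as A. pose proof (H1 _ Hz 0%Z) as B.
  rewrite E, B in A. unfold shZ, w in A. simpl in A. unfold q0 in A. injection A. lra.
Qed.

Theorem mainTheorem14 :
  (forall q : quat, sigma_S_Phi0 shiftR q -> sigma_S shiftR q) /\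
  (exists q : quat, sigma_S shiftR q /\ ~ sigma_S_Phi0 shiftR q).
Proof.
  split.
  - intros q H1 H2. apply H1, part1, H2.
  - exists q0. split; [apply not_inv|].
    unfold sigma_S_Phi0. intros H; apply H.
    exists (shZ 2), Kop. split; [apply shZ_inv|]. split; [apply Kop_compact|].
    intros x _ i; apply decomp.
Qed.
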